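(* Let $L_1',L_2'\subseteq\mathcal{P}$ be simple event logs, $bk\in\mathcal{A}^*$, $n\in\mathbb{N}_{\ge1}$, $M_1=ms^{L_1',n}(bk)$ and $M_2=ms^{L_2',n}(bk)$. Let $CG(M_1,M_2)$ be the set of pairs $(g_1',g_2')$ where $g_1'$ is a group of $M_1$, $g_2'$ is a group of $M_2$, and $g_1'\overset{n}{\sim}g_2'$, and set $C(M_1,M_2)=\sum_{(g_1',g_2')\in CG(M_1,M_2)}\big(|g_2'|-\min(|g_1'|,|g_2'|)\big)$. Then for every linker $f$ (w.r.t. $n$) from $L_1'$ to $L_2'$, at least $C(M_1,M_2)$ elements of $M_2$ are not of the form $f(p_1')$ with $p_1'\in M_1$; more precisely, for each $(g_1',g_2')\in CG(M_1,M_2)$, at least $|g_2'|-\min(|g_1'|,|g_2'|)$ elements of $g_2'$ are not images under $f$ of elements of $M_1$.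
   Context: $\mathcal{P}=\mathcal{C}\times\mathcal{A}^*\times\mathcal{S}$ is the set of simple process instances $p=(c,\sigma,s)$ (case id, sequence of activities, sensitive value) with projections $\pi_c,\pi_\sigma,\pi_s$; a simple event log is a finite $L\subseteq\mathcal{P}$ in which elements with equal case ids are equal. $\sqsubseteq$ is the (not necessarily contiguous) subsequence relation; $pref(\langle a_1,\dots,a_m\rangle)=\{\langle a_1,\dots,a_k\rangle\mid 1\le k\le m\}$; $LCS(\sigma_1,\sigma_2)$ is the set of longest common subsequences, $LCS^{\sigma_1}_{\sigma_2}$ their length, and $SCS^{\sigma_1}_{\sigma_2}$ the length of a shortest common super-sequence. Specialization: $p'\preceq_n p$ iff $\pi_\sigma(p')\sqsubseteq\pi_\sigma(p)$, $|\pi_\sigma(p)|\le|\pi_\sigma(p')|+n$, and $\pi_s(p)=\pi_s(p')$. Matching set: $ms^{L',n}(bk)=\{p'\in L'\mid \exists p\in\mathcal{P}: p'\preceq_n p \wedge bk\sqsubseteq\pi_\sigma(p)\}$. A group of a matching set $M$ is a nonempty set of the form $\{p\in M\mid \pi_s(p)=v\}$ for some $v\in\mathcal{S}$. Linker: a total injective function $f:L_1'\to L_2'$ such that for every $p_1'\in L_1'$ there exist $p_1,p_2\in\mathcal{P}$ with $p_1'\preceq_n p_1$, $f(p_1')\preceq_n p_2$, $\pi_s(p_1)=\pi_s(p_2)$, and $\pi_\sigma(p_1)\in pref(\pi_\sigma(p_2))$. Comparable sequences: $\sigma_1\overset{n}{\sim}\sigma_2$ iff $n\ge|\sigma_1|-LCS^{\sigma_1}_{\sigma_2}$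 in case some $\sigma\in LCS(\sigma_1,\sigma_2)$ lies in $pref(\sigma_2)$, and $n\ge SCS^{\sigma_1}_{\sigma_2}-\min(|\sigma_1|,|\sigma_2|)$ otherwise. Comparable process instances: $p_1\overset{n}{\sim}p_2$ iff $\pi_s(p_1)=\pi_s(p_2)$ and $\pi_\sigma(p_1)\overset{n}{\sim}\pi_\sigma(p_2)$. Comparable groups: $g_1'\overset{n}{\sim}g_2'$ iff $p_1'\overset{n}{\sim}p_2'$ for all $p_1'\in g_1'$, $p_2'\in g_2'$. *)

(* Defs.v *)
From mathcomp Require Import all_boot finmap.
From mathcomp Require Import boolp.

Set Implicit Arguments.
Unset Strict Implicit.
Unset Printing Implicit Defensive.

Local Open Scope fset_scope.

Section Defs.
Variables (C A S : choiceType).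

Definition proc := (C * seq A * S)%type.
Definition pc (p : proc) : C := p.1.1.
Definition psig (p : proc) : seq A := p.1.2.
Definition ps (p : proc) : S := p.2.

Definition simple_log (L : {fset proc}) : Prop :=
  forall p q, p \in L -> q \in L -> pc p = pc q -> p = q.

Definition in_pref (s t : seq A) : bool := (0 < size s) && prefix s t.

Definition spec (n : nat) (p' p : proc) : Prop :=
  [/\ subseq (psig p') (psig p), size (psig p) <= size (psig p') + n
    & ps p = ps p'].

Definition ms (L' : {fset proc}) (n : nat) (bk : seq A) : {fset proc} :=
  [fset p' in L' | `[< exists p : proc, spec n p' p /\ subseq bk (psig p) >]].

Definition is_group (M g : {fset proc}) : Prop :=
  g != fset0 /\ exists v : S, g = [fset p in M | ps p == v].

Definition linker (n : nat) (L1' L2' : {fset proc}) (f : proc -> proc) : Prop :=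
  [/\ {in L1', forall p, f p \in L2'},
      {in L1' &, injective f}
    & {in L1', forall p1', exists p1 p2 : proc,
          [/\ spec n p1' p1, spec n (f p1') p2, ps p1 = ps p2
            & in_pref (psig p1) (psig p2)]}].

Definition is_LCS (s1 s2 s : seq A) : Prop :=
  [/\ subseq s s1, subseq s s2 &
      forall t, subseq t s1 -> subseq t s2 -> size t <= size s].

Definition is_SCS (s1 s2 s : seq A) : Prop :=
  [/\ subseq s1 s, subseq s2 s &
      forall t, subseq s1 t -> subseq s2 t -> size s <= size t].

(* comparable sequences sigma1 ~n sigma2 (LCS^{s1}_{s2} is the common length
   of all elements of LCS(s1,s2), SCS^{s1}_{s2} the common length of all
   shortest common super-sequences) *)
Definition comparable_seq (n : nat) (s1 s2 : seq A) : Prop :=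
  ((exists s, is_LCS s1 s2 s /\ in_pref s s2) ->
     forall s, is_LCS s1 s2 s -> size s1 - size s <= n) /\
  (~ (exists s, is_LCS s1 s2 s /\ in_pref s s2) ->
     forall s, is_SCS s1 s2 s -> size s - minn (size s1) (size s2) <= n).

Definition comparable_proc (n : nat) (p1 p2 : proc) : Prop :=
  ps p1 = ps p2 /\ comparable_seq n (psig p1) (psig p2).

Definition comparable_group (n : nat) (g1 g2 : {fset proc}) : Prop :=
  forall p1 p2, p1 \in g1 -> p2 \in g2 -> comparable_proc n p1 p2.

Definition CG (n : nat) (M1 M2 : {fset proc}) : {fset {fset proc} * {fset proc}} :=
  [fset gg in fpowerset M1 `*` fpowerset M2 |
     `[< is_group M1 gg.1 /\ is_group M2 gg.2 /\ comparable_group n gg.1 gg.2 >]].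

Definition Cnt (n : nat) (M1 M2 : {fset proc}) : nat :=
  \sum_(gg <- CG n M1 M2) (#|` gg.2| - minn #|` gg.1| #|` gg.2|).

End Defs.

(* Main.v *)
Require Import Defs.
From mathcomp Require Import all_boot finmap boolp.
From mathcomp Require Import zify.

Local Open Scope fset_scope.

Section Aux.
Variables (C A S : choiceType).
Local Notation P := (proc C A S).

Lemma CG_char n (M1 M2 g1 g2 : {fset P}) p :
  (g1, g2) \in CG n M1 M2 -> p \in g2 ->
  g1 = [fset q in M1 | ps q == ps p] /\ g2 = [fset q in M2 | ps q == ps p].
Proof.
rewrite /CG inE /= => /andP [_ /asboolP /= [[ne1 [v1 e1]] [[ne2 [v2 e2]] cmp]]] pg2.
have hv2 : ps p = v2 by move: pg2; rewrite e2 !inE => /andP [_ /eqP].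
have [q qg1] : exists q, q \in g1.
  by case: (fset_0Vmem g1) ne1 => [->|[q ?] _]; [rewrite eqxx | exists q].
have hv1 : ps q = v1 by move: qg1; rewrite e1 !inE => /andP [_ /eqP].
have [e _] := cmp q p qg1 pg2.
by split; [rewrite e1 -hv1 e hv2 | rewrite e2 hv2].
Qed.

Lemma sum_disj (T : eqType) (s : seq T) (F : T -> {fset P}) (D : {fset P}) :
  uniq s ->
  (forall x y p, x \in s -> y \in s -> p \in F x -> p \in F y -> x = y) ->
  (forall x, x \in s -> F x `<=` D) ->
  \sum_(x <- s) #|` F x| <= #|` D|.
Proof.
elim: s D => [|x s IH] D /=; first by rewrite big_nil.
move=> /andP [xs us] hd hs; rewrite big_cons.
have sub : F x `<=` D by apply: hs; rewrite inE eqxx.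
rewrite -(cardfsID (F x) D).
have -> : D `&` F x = F x.
  by apply/fsetP => p; rewrite inE; case pF: (p \in F x); rewrite ?andbF ?andbT //; apply: (fsubsetP sub).
rewrite leq_add2l; apply: IH => //.
- by move=> a b p ha hb; apply: hd; rewrite inE ?ha ?hb orbT.
- move=> y ys; apply/fsubsetP => p pF; rewrite inE.
  have -> : p \in D by apply: (fsubsetP (hs y _)) => //; rewrite inE ys orbT.
  rewrite andbT; apply/negP => pFx.
  have exy : x = y by apply: (hd x y p) => //; rewrite inE ?eqxx ?ys ?orbT.
  by move: xs; rewrite exy ys.
Qed.

End Aux.
Arguments CG_char {C A S n M1 M2 g1 g2 p}.
Arguments sum_disj {C A S T s F D}.

Theorem theorem4 (C A S : choiceType) (L1' L2' : {fset proc C A S})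
  (bk : seq A) (n : nat) (f : proc C A S -> proc C A S) :
  simple_log L1' -> simple_log L2' -> 0 < n ->
  linker n L1' L2' f ->
  let M1 := ms L1' n bk in
  let M2 := ms L2' n bk in
  Cnt n M1 M2 <= #|` [fset p in M2 | p \notin [fset f x | x in M1]] | /\
  (forall g1 g2, (g1, g2) \in CG n M1 M2 ->
     #|` g2| - minn #|` g1| #|` g2| <= #|` [fset p in g2 | p \notin [fset f x | x in M1]] |).
Proof.
move=> _ _ _ [_ finj fps] M1 M2.
set X := [fset f x | x in M1].
have M1L : forall x, x \in M1 -> x \in L1'.
  by move=> x; rewrite /M1 /ms !inE => /andP [].
have psf : forall x, x \in M1 -> ps (f x) = ps x.
  move=> x /M1L xL; have [p1 [p2 [[_ _ h1] [_ _ h2] h3 _]]] := fps x xL.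
  by rewrite -h2 -h3 h1.
have part2 : forall g1 g2, (g1, g2) \in CG n M1 M2 ->
     #|` g2| - minn #|` g1| #|` g2| <= #|` [fset p in g2 | p \notin X] |.
  move=> g1 g2 hCG.
  have sub : g2 `&` X `<=` f @` g1.
    apply/fsubsetP => p; rewrite !inE => /andP [pg2 /imfsetP [x /= xM1 px]].
    have [e1 _] := CG_char hCG pg2.
    apply/imfsetP; exists x => //=; rewrite e1 inE; apply/andP; split => //.
    by rewrite px psf.
  have c1 : #|` f @` g1| <= #|` g1|.
    apply: (leq_trans (leq_imfset_card _ _ _)).
    exact: leqnn.
  have e : [fset p in g2 | p \notin X] = g2 `\` X.
    by apply/fsetP => p; rewrite !inE andbC.
  rewrite e -(cardfsID X g2).
  have := fsubset_leq_card sub.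
  rewrite /minn; case: ifP => _; lia.
split => //.
rewrite /Cnt.
apply: (@leq_trans (\sum_(gg <- CG n M1 M2) #|` [fset p in gg.2 | p \notin X]|)).
  rewrite big_seq_cond [X in _ <= X]big_seq_cond; apply: leq_sum => -[g1 g2] /andP [hg _]; exact: part2.
apply: sum_disj.
- exact: fset_uniq.
- move=> [a1 a2] [b1 b2] p ha hb /=; rewrite !inE => /andP [pa _] /andP [pb _].
  have [-> ->] := CG_char ha pa.
  by have [-> ->] := CG_char hb pb.
- move=> [g1 g2] hg /=; apply/fsubsetP => p; rewrite !inE => /andP [pg2 ->].
  have [_ e2] := CG_char hg pg2.
  by move: pg2; rewrite e2 !inE eqxx !andbT.
Qed.
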